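(* Let $H$ be a Hilbert space over $\mathbb{F}\in\{\mathbb{R},\mathbb{C}\}$, $n\ge1$, and $S\subseteq H^n$. Suppose that for every $U\in S$ there exist $\Theta(U)\in St(n,H)\cap S$ and a polynomial path up to reparametrization $\gamma:[0,1]\to H^n$ with $\gamma(0)=U$, $\gamma(1)=\Theta(U)$ and $\gamma([0,1])\subseteq S$. Then $St(n,H)\cap S$ is dense in $S$.
   Context: $H^n$ carries the norm $\|(h_1,\dots,h_n)\|^2=\sum_{k=1}^n\|h_k\|^2$. $St(n,H)=\{(h_1,\dots,h_n)\in H^n:\ h_1,\dots,h_n \text{ linearly independent}\}$. A map $\gamma:[0,1]\to V$ into a vector space $V$ is a polynomial path up to reparametrization if there exist $q\in\mathbb{N}$, vectors $v^0,\dots,v^q\in V$, real numbers $a<b$ and a homeomorphism $\phi:[0,1]\to[a,b]$ such that $\gamma(\phi^{-1}(t))=\sum_{k=0}^q t^k v^k$ for all $t\in[a,b]$. *)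

(* Defs.v *)
From HB Require Import structures.
From mathcomp Require Import all_boot all_order all_algebra.
From mathcomp Require Import all_classical all_reals all_analysis.
From mathcomp Require Import complex.
Set Implicit Arguments. Unset Strict Implicit. Unset Printing Implicit Defensive.
Import Order.TTheory GRing.Theory Num.Theory numFieldNormedType.Exports.
Local Open Scope classical_set_scope.
Local Open Scope ring_scope.

(* Hilbert space over a number field K (used with K = R and K = R[i]):
   an inner product [ip], linear in the first argument, conjugate-symmetric
   w.r.t. [conj], positive definite, and complete for the induced norm
   ||x|| = sqrt (ip x x).  (We compare squared norms: ||x|| < e <-> ip x x < e^2.) *)
Definition hilbert_space (K : numFieldType) (V : lmodType K)
  (conj : K -> K) (ip : V -> V -> K) : Prop :=
  [/\ (forall (a : K) (x y z : V), ip (a *: x + y) z = a * ip x z + ip y z),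
      (forall x y : V, ip y x = conj (ip x y)),
      (forall x : V, 0 <= ip x x),
      (forall x : V, ip x x = 0 -> x = 0) &
      (forall u : nat -> V,
         (forall e : K, 0 < e -> exists N : nat, forall m k : nat,
              (N <= m)%N -> (N <= k)%N -> ip (u m - u k) (u m - u k) < e) ->
         exists l : V, forall e : K, 0 < e -> exists N : nat, forall k : nat,
              (N <= k)%N -> ip (u k - l) (u k - l) < e)].

Definition sqnormHn (K : numFieldType) (V : lmodType K) (ip : V -> V -> K)
  (n : nat) (U : 'I_n -> V) : K := \sum_(k < n) ip (U k) (U k).

Definition St (K : numFieldType) (V : lmodType K) (n : nat) : set ('I_n -> V) :=
  [set h | forall c : 'I_n -> K, \sum_(k < n) c k *: h k = 0 -> forall k, c k = 0].

Definition homeo_with_inverse (R : realType) (phi psi : R -> R) (a b : R) : Prop :=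
  [/\ {within `[0, 1]%classic, continuous phi},
      {within `[a, b]%classic, continuous psi},
      (forall s, s \in `[0, 1] -> phi s \in `[a, b] /\ psi (phi s) = s) &
      (forall t, t \in `[a, b] -> psi t \in `[0, 1] /\ phi (psi t) = t)].

(* gamma : [0,1] -> H^n is a polynomial path up to reparametrization; real
   scalars act on H through the embedding [emb : R -> K]. *)
Definition poly_path_reparam (R : realType) (K : numFieldType) (emb : R -> K)
  (V : lmodType K) (n : nat) (gamma : R -> 'I_n -> V) : Prop :=
  exists (q : nat) (v : 'I_q.+1 -> 'I_n -> V) (a b : R) (phi psi : R -> R),
    [/\ a < b, homeo_with_inverse phi psi a b &
        forall t, t \in `[a, b] -> forall j : 'I_n,
          gamma (psi t) j = \sum_(k < q.+1) (emb t) ^+ k *: v k j].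

Definition cor45_for (R : realType) (K : numFieldType) (conj : K -> K)
  (emb : R -> K) : Prop :=
  forall (V : lmodType K) (ip : V -> V -> K) (n : nat) (S : set ('I_n -> V)),
    hilbert_space conj ip -> (1 <= n)%N ->
    (forall U, S U -> exists Th : 'I_n -> V, (@St K V n Th /\ S Th) /\
       exists gamma : R -> 'I_n -> V, [/\ poly_path_reparam emb gamma,
          gamma 0 = U, gamma 1 = Th &
          forall t, t \in `[0, 1] -> S (gamma t)]) ->
    (forall U, S U -> forall e : K, 0 < e ->
       exists W, (@St K V n W /\ S W) /\ sqnormHn ip (fun k => U k - W k) < e).

(* Main.v *)
Require Import Defs.
From HB Require Import structures.
From mathcomp Require Import all_boot all_order all_algebra.
From mathcomp Require Import all_classical all_reals all_analysis.
From mathcomp Require Import complex.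
From mathcomp Require Import ring lra.
Import Order.TTheory GRing.Theory Num.Theory numFieldNormedType.Exports.
Local Open Scope classical_set_scope.
Local Open Scope ring_scope.
Set Implicit Arguments. Unset Strict Implicit.

Lemma ip_lin_facts (K : numFieldType) (V : lmodType K) (ip : V -> V -> K)
  (Hl : forall (a : K) (x y z : V), ip (a *: x + y) z = a * ip x z + ip y z) :
  (forall z, ip 0 z = 0) /\ (forall x y z, ip (x + y) z = ip x z + ip y z)
  /\ (forall a x z, ip (a *: x) z = a * ip x z).
Proof.
have h0 : forall z, ip 0 z = 0.
  move=> z; have := Hl 1 0 0 z; rewrite scale1r addr0 mul1r => H.
  by apply: (@addrI _ (ip 0 z)); rewrite addr0 -H.
split; first exact: h0.
split=> [x y z|a x z].
  by have := Hl 1 x y z; rewrite scale1r mul1r.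
by rewrite -[a *: x]addr0 Hl h0 addr0.
Qed.

Lemma ip_suml (K : numFieldType) (V : lmodType K) (ip : V -> V -> K)
  (Hl : forall (a : K) (x y z : V), ip (a *: x + y) z = a * ip x z + ip y z)
  (m : nat) (c : 'I_m -> K) (x : 'I_m -> V) z :
  ip (\sum_(i < m) c i *: x i) z = \sum_(i < m) c i * ip (x i) z.
Proof.
have [h0 [hD hZ]] := ip_lin_facts Hl.
elim: m c x => [|m IH] c x; first by rewrite !big_ord0 h0.
by rewrite !big_ord_recr /= hD hZ IH.
Qed.

Lemma conj_facts (K : numFieldType) (conj : K -> K)
  (conjD : forall x y, conj (x + y) = conj x + conj y) :
  conj 0 = 0 /\ (forall x, conj (- x) = - conj x).
Proof.
have h0 : conj 0 = 0.
  have := conjD 0 0; rewrite addr0 => H.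
  by apply: (@addrI _ (conj 0)); rewrite addr0 -H.
split=> // x; apply/eqP; rewrite -subr_eq0 opprK -conjD.
by rewrite addNr h0.
Qed.

Lemma conj_sum (K : numFieldType) (conj : K -> K)
  (conjD : forall x y, conj (x + y) = conj x + conj y) m (F : 'I_m -> K) :
  conj (\sum_(i < m) F i) = \sum_(i < m) conj (F i).
Proof.
have [h0 _] := conj_facts conjD.
elim: m F => [|m IH] F; first by rewrite !big_ord0.
by rewrite !big_ord_recr /= conjD IH.
Qed.

Lemma ip_comb (K : numFieldType) (V : lmodType K) (conj : K -> K) (ip : V -> V -> K)
  (Hl : forall (a : K) (x y z : V), ip (a *: x + y) z = a * ip x z + ip y z)
  (Hs : forall x y : V, ip y x = conj (ip x y))
  (conjD : forall x y, conj (x + y) = conj x + conj y)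
  (conjM : forall x y, conj (x * y) = conj x * conj y)
  m (a : 'I_m -> K) (x : 'I_m -> V) m' (b : 'I_m' -> K) (y : 'I_m' -> V) :
  ip (\sum_(k < m) a k *: x k) (\sum_(l < m') b l *: y l) =
  \sum_(k < m) \sum_(l < m') a k * conj (b l) * ip (x k) (y l).
Proof.
rewrite ip_suml //; apply: eq_bigr => k _.
rewrite Hs ip_suml // conj_sum // mulr_sumr; apply: eq_bigr => l _.
by rewrite conjM -Hs mulrA.
Qed.
Definition gram (K : numFieldType) (V : lmodType K) (ip : V -> V -> K) n
  (W : 'I_n -> V) : 'M[K]_n := \matrix_(i, j) ip (W i) (W j).

Lemma gram_St (K : numFieldType) (V : lmodType K) (conj : K -> K) (ip : V -> V -> K)
  (Hl : forall (a : K) (x y z : V), ip (a *: x + y) z = a * ip x z + ip y z)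
  (Hs : forall x y : V, ip y x = conj (ip x y))
  (conjD : forall x y, conj (x + y) = conj x + conj y)
  (Hd : forall x : V, ip x x = 0 -> x = 0) n (W : 'I_n -> V) :
  @St K V n W <-> \det (gram ip W) != 0.
Proof.
have [h0 _] := ip_lin_facts Hl.
have [c0 _] := conj_facts conjD.
have Hmul : forall v : 'rV[K]_n, forall j,
    (v *m gram ip W) 0 j = ip (\sum_(i < n) v 0 i *: W i) (W j).
  move=> v j; rewrite ip_suml // !mxE; apply: eq_bigr => i _; by rewrite mxE.
split.
  move=> HSt; apply/negP => /det0P [v v0 Hv].
  set w := \sum_(i < n) v 0 i *: W i.
  have Hj : forall j, ip w (W j) = 0.
    by move=> j; rewrite -Hmul Hv mxE.
  have Hw : w = 0.
    apply: Hd; rewrite {2}/w Hs ip_suml // big1 ?c0 // => j _.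
    by rewrite Hs Hj c0 mulr0.
  move/negP: v0; apply; apply/eqP/rowP => k.
  by rewrite mxE; exact: (HSt (fun i => v 0 i) Hw k).
move=> Hdet c Hc k.
pose v : 'rV[K]_n := \row_k c k.
have [v0|v0] := eqVneq v 0.
  by have := congr1 (fun M : 'rV[K]_n => M 0 k) v0; rewrite /= !mxE.
exfalso; move/negP: Hdet; apply; apply/det0P; exists v => //.
apply/rowP => j; rewrite Hmul [in RHS]mxE.
rewrite (eq_bigr (fun i => c i *: W i)) ?Hc ?h0 // => i _.
by rewrite mxE.
Qed.
Lemma poly_cvg (R : realType) (K : numFieldType) (f : R -> K) (t0 : R)
  (p : {poly K}) :
  f x @[x --> t0] --> f t0 -> (fun t => p.[f t]) x @[x --> t0] --> p.[f t0].
Proof.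
move=> Hf; elim/poly_ind: p => [|p c IH].
  rewrite horner0; under eq_fun do rewrite horner0; exact: cvg_cst.
rewrite hornerMXaddC; under eq_fun do rewrite hornerMXaddC.
apply: cvgD; last exact: cvg_cst.
exact: cvgM.
Qed.

Lemma nonroot (R : realType) (K : numFieldType) (emb : R -> K)
  (embI : injective emb) (p : {poly K}) (p0 : p != 0) (c d : R) (d0 : 0 < d) :
  exists t, c <= t <= c + d /\ p.[emb t] != 0.
Proof.
apply/not_existsP => H.
pose pt (m : nat) : R := c + d / (m.+1)%:R.
have ptin : forall m, c <= pt m <= c + d.
  move=> m; rewrite /pt lerDl lerD2l; apply/andP; split.
    by rewrite divr_ge0 // ltW.
  rewrite ler_pdivrMr ?ltr0Sn //.
  by apply: ler_peMr; [exact: ltW|rewrite ler1n].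
have ptI : injective pt.
  move=> m1 m2; rewrite /pt => /addrI /(mulfI (lt0r_neq0 d0)) /invr_inj /eqP.
  by rewrite eqr_nat eqSS => /eqP.
suff : false by [].
rewrite -(ltnn (size p)) -{1}(size_iota 0 (size p)) -(size_map (fun m => emb (pt m))).
apply: (max_poly_roots p0).
  apply/allP => x /mapP [m _ ->]; rewrite /root.
  apply/negPn/negP => Hn; apply: (H (pt m)); split => //.
rewrite map_inj_in_uniq ?iota_uniq // => m1 m2 _ _ /embI; exact: ptI.
Qed.
Lemma small_pos (R : realType) (x y : R) : 0 < x -> 0 < y ->
  exists z : R, [/\ 0 < z, z <= x & z <= y].
Proof.
move=> x0 y0; have [h|h] := leP x y.
  by exists x; split => //.
by exists y; split => //; exact: ltW.
Qed.

Lemma generic (R : realType) (K : numFieldType) (conj : K -> K) (emb : R -> K)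
  (conjD : forall x y, conj (x + y) = conj x + conj y)
  (conjM : forall x y, conj (x * y) = conj x * conj y)
  (conj1 : conj 1 = 1)
  (conjE : forall t, conj (emb t) = emb t)
  (embI : injective emb)
  (embC : forall t0, emb x @[x --> t0] --> emb t0) :
  cor45_for conj emb.
Proof.
move=> V ip n S [Hl Hs Hpos Hd _] n1 HS U SU e e0.
have [c0 cN] := conj_facts conjD.
have conjX : forall t k, conj (emb t ^+ k) = emb t ^+ k.
  move=> t; elim=> [|k IH]; first by rewrite !expr0.
  by rewrite !exprS conjM IH conjE.
have [Th [[StTh STh] [gamma [[q [v [a [b [phi [psi [ab [_ _ phiK psiK] Hpol]]]]]]] g0 g1 gS]]]] := HS U SU.
pose P (x : K) : 'I_n -> V := fun j => \sum_(k < q.+1) x ^+ k *: v k j.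
have HP : forall t, t \in `[a, b] -> gamma (psi t) = P (emb t).
  by move=> t ht; apply: funext => j; rewrite Hpol.
have [t0in psit0] : phi 0 \in `[a, b] /\ psi (phi 0) = 0.
  by apply: phiK; rewrite in_itv /= lexx ler01.
have [t1in psit1] : phi 1 \in `[a, b] /\ psi (phi 1) = 1.
  by apply: phiK; rewrite in_itv /= lexx ler01.
have HU : U = P (emb (phi 0)) by rewrite -HP // psit0 g0.
have HTh : Th = P (emb (phi 1)) by rewrite -HP // psit1 g1.
have HSP : forall t, t \in `[a, b] -> S (P (emb t)).
  move=> t ht; rewrite -HP //; apply: gS; by case: (psiK t ht).
pose M : 'M[{poly K}]_n := \matrix_(i, j) \sum_(k < q.+1) \sum_(l < q.+1)
    ip (v k i) (v l j) *: 'X^(k + l).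
have HG : forall t, gram ip (P (emb t)) = map_mx (horner_eval (emb t)) M.
  move=> t; apply/matrixP => i j; rewrite !mxE /P (ip_comb Hl Hs conjD conjM) horner_evalE horner_sum.
  apply: eq_bigr => k _; rewrite horner_sum; apply: eq_bigr => l _.
  by rewrite hornerZ hornerXn conjX exprD mulrC.
pose pd := \det M.
have Hpd : forall t, @St K V n (P (emb t)) <-> pd.[emb t] != 0.
  move=> t; rewrite (gram_St Hl Hs conjD Hd) HG det_map_mx.
  by [].
have pd0 : pd != 0.
  apply/eqP => pd0; move: StTh; rewrite HTh Hpd pd0 horner0 eqxx //.
set t0 := phi 0.
pose x0 := emb t0.
pose r : {poly K} := \sum_(j < n) \sum_(k < q.+1) \sum_(l < q.+1)
   (((x0 ^+ k)%:P - 'X^k) * ((x0 ^+ l)%:P - 'X^l) * (ip (v k j) (v l j))%:P).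
have Hr : forall t, sqnormHn ip (fun j => P x0 j - P (emb t) j) = r.[emb t].
  move=> t; rewrite /sqnormHn horner_sum; apply: eq_bigr => j _.
  have -> : P x0 j - P (emb t) j = \sum_(k < q.+1) (x0 ^+ k - emb t ^+ k) *: v k j.
    by rewrite /P -sumrB; apply: eq_bigr => k _; rewrite scalerBl.
  rewrite (ip_comb Hl Hs conjD conjM) horner_sum; apply: eq_bigr => k _; rewrite horner_sum.
  apply: eq_bigr => l _.
  by rewrite conjD cN /x0 !conjX !hornerE.
have Hr0 : r.[x0] = 0.
  rewrite horner_sum big1 // => j _; rewrite horner_sum big1 // => k _.
  by rewrite horner_sum big1 // => l _; rewrite !hornerE subrr mul0r mul0r.
have := @poly_cvg _ _ emb t0 r (embC t0).
move/cvgrPdist_lt/(_ e e0) => /nbhs_normP [d /= d0 Hdb].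
have Hfin : forall t, t \in `[a, b] -> `|t0 - t| < d -> pd.[emb t] != 0 ->
    exists W, (@St K V n W /\ S W) /\ sqnormHn ip (fun k => U k - W k) < e.
  move=> t tin td tp; exists (P (emb t)); split; first by split; [apply/Hpd|exact: HSP].
  rewrite HU Hr.
  have := Hdb t td; rewrite /= -/x0 Hr0 sub0r normrN ger0_norm //.
  rewrite -Hr /sqnormHn; apply: sumr_ge0 => j _; exact: Hpos.
move: t0in; rewrite in_itv /= => /andP [at0 t0b].
rewrite -/t0 in at0 t0b.
have [ht|ht] := ltP t0 b.
  have [dl [dl0 dld dlb]] := @small_pos _ (d / 2) (b - t0) (divr_gt0 d0 (ltr0Sn _ _)) (ltac:(by rewrite subr_gt0)).
  have [t [/andP [t1 t2] tp]] := @nonroot _ _ _ embI _ pd0 t0 dl dl0.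
  apply: (Hfin t) => //.
    rewrite in_itv /=; apply/andP; split; lra.
  rewrite ltr_norml; apply/andP; split; lra.
have [dl [dl0 dld dlb]] := @small_pos _ (d / 2) (t0 - a) (divr_gt0 d0 (ltr0Sn _ _)) (ltac:(by rewrite subr_gt0; exact: (lt_le_trans ab ht))).
have [t [/andP [t1 t2] tp]] := @nonroot _ _ _ embI _ pd0 (t0 - dl) dl dl0.
apply: (Hfin t) => //.
  rewrite in_itv /=; apply/andP; split; lra.
rewrite ltr_norml; apply/andP; split; lra.
Qed.
Lemma embC_complex (R : realType) (t0 : R) :
  (fun t : R => ((t%:C)%C : (R[i] : numFieldType))) x @[x --> t0] -->
  ((t0%:C)%C : (R[i] : numFieldType)).
Proof.
apply/cvgrPdist_lt => eps eps0.
have Hre : 0 < complex.Re eps.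
  by move: eps0; rewrite ltcE /= => /andP [_ ->].
have Heps : eps = ((complex.Re eps)%:C)%C.
  move: eps0; rewrite ltcE /= => /andP [/eqP Him _].
  by case: eps Him {Hre} => x y /= ->.
near=> t.
rewrite Heps -raddfB normc_def /= expr0n /= addr0 sqrtr_sqr ltcR.
near: t.
have := @cvg_id _ (nbhs t0); move/cvgrPdist_lt/(_ _ Hre) => //.
Unshelve. all: by end_near.
Qed.
Unset Implicit Arguments. Set Strict Implicit.

Theorem corollary4p5 (R : realType) :
  @cor45_for R (R : numFieldType) id id /\
  @cor45_for R (R[i] : numFieldType) (fun z => (z^*)%C) (fun t => (t%:C)%C).
Proof.
split.
  apply: (@generic R (R : numFieldType) id id) => //.
refine (@generic R (R[i] : numFieldType) (fun z => (z^*)%C) (fun t => (t%:C)%C) _ _ _ _ _ _).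
- by move=> x y; exact: raddfD.
- by move=> x y; exact: rmorphM.
- exact: conjc1.
- by move=> t; exact: conjc_real.
- exact: complexI.
- exact: embC_complex.
Qed.
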